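(* Let $q\in\mathbb{C}$ with $0<|q|\le 1$ and $A,B\in M_n$. (a) If $A,B\in\Pi^n_{s,\alpha}$ for some $\alpha\in[0,\pi/2)$, then $|q|^2 w_q(AB)\le \sec^2(\alpha)\, w_q(A)\,w_q(B)$. (b) If $A$ and $B$ are positive matrices, then $|q|^2 w_q(AB)\le w_q(A)\,w_q(B)$.
   Context: $M_n$ is the algebra of complex $n\times n$ matrices. For $|q|\le1$, $w_q(A)=\sup\{|\langle Ax,y\rangle|: \|x\|=\|y\|=1,\ \langle x,y\rangle=q\}$. For $\alpha\in[0,\pi/2)$, $S_\alpha=\{z:\operatorname{Re}z>0,\ |\operatorname{Im}z|\le\tan(\alpha)\operatorname{Re}z\}$ and $\Pi^n_{s,\alpha}=\{A\in M_n: W(A)\subseteq S_\alpha\}$, where $W(A)=\{\langle Ax,x\rangle:\|x\|=1\}$. Positive matrices are those in $\Pi^n_{s,0}$, i.e. positive definite matrices. *)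

(* Defs.v *)
From HB Require Import structures.
From mathcomp Require Import all_boot all_order all_algebra.
From mathcomp Require Import complex.
From mathcomp Require Import all_classical all_reals all_analysis.

Set Implicit Arguments.
Unset Strict Implicit.
Unset Printing Implicit Defensive.

Import Order.TTheory GRing.Theory Num.Theory.
Local Open Scope ring_scope.
Local Open Scope classical_set_scope.

Definition cdot (R : realType) (n : nat) (x y : 'cV[R[i]]_n) : R[i] :=
  \sum_(i < n) x i 0 * ((y i 0)^*)%C.

Definition cabs (R : realType) (z : R[i]) : R := Normc.normc z.

Definition wq (R : realType) (n : nat) (q : R[i]) (A : 'M[R[i]]_n) : R :=
  sup [set r : R | exists x y : 'cV[R[i]]_n,
         [/\ cdot x x = 1, cdot y y = 1, cdot x y = q &
             r = cabs (cdot (A *m x) y)]].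

Definition numrange (R : realType) (n : nat) (A : 'M[R[i]]_n) : set R[i] :=
  [set z | exists x : 'cV[R[i]]_n, cdot x x = 1 /\ z = cdot (A *m x) x].

Definition sector (R : realType) (alpha : R) : set R[i] :=
  [set z | 0 < complex.Re z /\ `|complex.Im z| <= tan alpha * complex.Re z].

Definition Pi_s (R : realType) (n : nat) (alpha : R) : set 'M[R[i]]_n :=
  [set A | numrange A `<=` sector alpha].

Definition positive_mx (R : realType) (n : nat) (A : 'M[R[i]]_n) : Prop :=
  Pi_s 0 A.

(* Main.v *)
Require Import Defs.
From HB Require Import structures.
From mathcomp Require Import all_boot all_order all_algebra.
From mathcomp Require Import complex.
From mathcomp Require Import all_classical all_reals all_analysis.
From mathcomp Require Import ring lra.
Import Order.TTheory GRing.Theory Num.Theory.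
Local Open Scope ring_scope.
Local Notation RE := complex.Re.
Local Notation IM := complex.Im.
Section Scal.
Variable R : realType.
Implicit Types (z w : R[i]).

Lemma cabs2 z : cabs z ^+ 2 = RE z ^+ 2 + IM z ^+ 2.
Proof. by case: z => a b; rewrite /cabs /= sqr_sqrtr // addr_ge0 ?sqr_ge0. Qed.

Lemma cabs_ge0 z : 0 <= cabs z.
Proof. by case: z => a b; rewrite /cabs /= sqrtr_ge0. Qed.

Lemma cabsM z w : cabs (z * w) = cabs z * cabs w.
Proof. exact: Normc.normcM. Qed.

Lemma cabsD z w : cabs (z + w) <= cabs z + cabs w.
Proof. exact: le_normcD. Qed.

Lemma cabsN z : cabs (- z) = cabs z.
Proof. exact: normcN. Qed.

Lemma cabs_conj z : cabs (z^*%C) = cabs z.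
Proof. by case: z => a b; rewrite /cabs /= sqrrN. Qed.

Lemma cabs_real (r : R) : 0 <= r -> cabs (r%:C%C) = r.
Proof. by move=> r0; rewrite /cabs /= expr0n /= addr0 sqrtr_sqr ger0_norm. Qed.

Lemma Re_le_cabs z : RE z <= cabs z.
Proof.
have h := cabs_ge0 z.
case: (lerP (RE z) 0) => [h0|h0]; first by apply: le_trans h.
have := cabs2 z. nra.
Qed.

Lemma cabs_eq0 z : cabs z = 0 -> z = 0.
Proof. exact: Normc.eq0_normc. Qed.

Lemma expandRe (mu a1 a2 b c t : R[i]) :
  RE (mu * (a1 + t^*%C * b + t * c + t * t^*%C * a2)) =
  RE (mu * a1) + (RE t * RE (mu * c + mu^*%C * b^*%C) - IM t * IM (mu * c + mu^*%C * b^*%C))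
   + (RE t ^+ 2 + IM t ^+ 2) * RE (mu * a2).
Proof.
case: mu => m1 m2; case: a1 => x1 y1; case: a2 => x2 y2; case: b => b1 b2;
case: c => c1 c2; case: t => t1 t2. simpc. rewrite /=. ring.
Qed.

Lemma discr (P Q W1 W2 : R) : 0 <= Q ->
  (forall t1 t2, 0 <= P + (t1 * W1 - t2 * W2) + (t1 ^+ 2 + t2 ^+ 2) * Q) ->
  W1 ^+ 2 + W2 ^+ 2 <= 4 * P * Q.
Proof.
move=> Q0 H; set S := W1 ^+ 2 + W2 ^+ 2.
have S0 : 0 <= S by rewrite /S addr_ge0 ?sqr_ge0.
case: (ltrP 0 Q) => [Qp|Qn].
  have := H (- W1 / (2 * Q)) (W2 / (2 * Q)).
  have -> : P + (- W1 / (2 * Q) * W1 - W2 / (2 * Q) * W2) +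
     ((- W1 / (2 * Q)) ^+ 2 + (W2 / (2 * Q)) ^+ 2) * Q = P - S / (4 * Q).
    rewrite /S; field; lra.
  rewrite subr_ge0 ler_pdivrMr; last lra.
  lra.
have Qe : Q = 0 by lra.
case: (ltrP 0 S) => [Sp|Sn]; last by rewrite Qe mulr0.
have := H (- W1 * ((P + 1) / S)) (W2 * ((P + 1) / S)).
have -> : P + (- W1 * ((P + 1) / S) * W1 - W2 * ((P + 1) / S) * W2) +
   ((- W1 * ((P + 1) / S)) ^+ 2 + (W2 * ((P + 1) / S)) ^+ 2) * Q = -1.
  rewrite Qe mulr0 addr0.
  have -> : - W1 * ((P + 1) / S) * W1 - W2 * ((P + 1) / S) * W2 = - ((P+1) / S * S)
    by rewrite /S; ring.
  rewrite divfK; [ring | lra].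
lra.
Qed.

Lemma GLc (mu a1 a2 b c : R[i]) :
  (forall t, 0 <= RE (mu * (a1 + t^*%C * b + t * c + t * t^*%C * a2))) ->
  0 <= RE (mu * a2) ->
  cabs (mu * c + mu^*%C * b^*%C) ^+ 2 <= 4 * RE (mu * a1) * RE (mu * a2).
Proof.
move=> H Q0; rewrite cabs2; apply: discr => // t1 t2.
by have := H (t1 +i* t2)%C; rewrite expandRe.
Qed.

Definition sect (tau : R) z := 0 <= RE z /\ `|IM z| <= tau * RE z.

Lemma sect_p tau z : sect tau z -> 0 <= RE ((tau +i* (-1))%C * z).
Proof.
case: z => x y [/= h1 h2]; simpc; rewrite /=.
have := ler_norm (- y); rewrite normrN; lra.
Qed.

Lemma sect_m tau z : sect tau z -> 0 <= RE ((tau +i* 1)%C * z).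
Proof.
case: z => x y [/= h1 h2]; simpc; rewrite /=.
have := ler_norm y; lra.
Qed.

Lemma sect_1 tau z : sect tau z -> 0 <= RE (1 * z).
Proof. by rewrite mul1r => -[]. Qed.

Lemma idW (tau : R) (b c : R[i]) :
  (4 * tau)%:C%C * b^*%C = - 'i%C * ((tau +i* 1)%C * ((tau +i* (-1))%C * c + (tau +i* (-1))^*%C * b^*%C)
     - (tau +i* (-1))%C * ((tau +i* 1)%C * c + (tau +i* 1)^*%C * b^*%C)).
Proof.
case: b => b1 b2; case: c => c1 c2; simpc; rewrite /=.
apply/eqP; rewrite eq_complex /=; apply/andP; split; apply/eqP; ring.
Qed.

Arguments sect_1 {tau z}.
Arguments sect_p {tau z}.
Arguments sect_m {tau z}.

Lemma SL (tau : R) (a1 a2 b c : R[i]) : 0 <= tau ->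
  (forall t, sect tau (a1 + t^*%C * b + t * c + t * t^*%C * a2)) ->
  sect tau a2 ->
  cabs b ^+ 2 <= (1 + tau ^+ 2) * RE a1 * RE a2.
Proof.
move=> t0 H s2.
have s1 : sect tau a1.
  by have := H 0; rewrite conjc0 !mul0r !addr0.
have H1 := @GLc 1 a1 a2 b c (fun t => sect_1 (H t)) (sect_1 s2).
have Hp := @GLc (tau +i* (-1))%C a1 a2 b c (fun t => sect_p (H t)) (sect_p s2).
have Hm := @GLc (tau +i* 1)%C a1 a2 b c (fun t => sect_m (H t)) (sect_m s2).
have P1 := sect_p s1; have P2 := sect_p s2; have M1 := sect_m s1; have M2 := sect_m s2.
move: H1 Hp Hm P1 P2 M1 M2.
case: (ltrP 0 tau) => [tp|tn]; last first.
  have te : tau = 0 by lra.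
  rewrite te; move: s1 s2; clear H; rewrite /sect te.
  case: a1 => x1 y1; case: a2 => x2 y2; case: b => b1 b2; case: c => c1 c2.
  rewrite !cabs2; simpc; rewrite /= => -[h1 _] [h2 _] H1 Hp Hm P1 P2 M1 M2.
  have ey1 : y1 = 0 by lra.
  have ey2 : y2 = 0 by lra.
  rewrite ey1 mulr0 mul0r in Hp.
  have q1 := sqr_ge0 (c2 + b2); have q2 := sqr_ge0 (- c1 + b1).
  have /eqP : (c2 + b2) ^+ 2 = 0 by lra.
  rewrite sqrf_eq0 => /eqP f1.
  have /eqP : (- c1 + b1) ^+ 2 = 0 by lra.
  rewrite sqrf_eq0 => /eqP f2.
  have e1 : c2 = - b2 by lra.
  have e2 : c1 = b1 by lra.
  rewrite e1 e2 in H1.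
  rewrite expr0n /= addr0 mul1r; nra.
clear H.
set Wp := ((tau +i* (-1))%C * c + (tau +i* (-1))^*%C * b^*%C).
set Wm := ((tau +i* 1)%C * c + (tau +i* 1)^*%C * b^*%C).
move=> H1 Hp Hm P1 P2 M1 M2.
have Id := idW tau b c.
have s2e : cabs ((tau +i* 1)%C) ^+ 2 = 1 + tau ^+ 2 by rewrite cabs2 /=; ring.
have s2e' : cabs ((tau +i* (-1))%C) = cabs ((tau +i* 1)%C).
  by rewrite /cabs /= sqrrN.
have Hle : 4 * tau * cabs b <= cabs ((tau +i* 1)%C) * (cabs Wp + cabs Wm).
  have -> : 4 * tau * cabs b = cabs ((4 * tau)%:C%C * b^*%C).
    by rewrite cabsM cabs_conj cabs_real //; lra.
  rewrite Id cabsM cabsN.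
  have -> : cabs 'i%C = 1 :> R by rewrite /cabs /= expr0n expr1n /= add0r sqrtr1.
  rewrite mul1r -/Wp -/Wm; apply: le_trans (cabsD _ _) _.
  by rewrite cabsN !cabsM s2e' mulrDr.
have ga := cabs_ge0 Wp; have gd := cabs_ge0 Wm; have gs := cabs_ge0 ((tau +i* 1)%C).
have gb := cabs_ge0 b.
move: H1 Hp Hm P1 P2 M1 M2 Hle ga gd gs gb s2e.
set a := cabs Wp; set d := cabs Wm; set B := cabs b.
move: s1 s2; clear Id; rewrite /sect.
case: a1 => x1 y1; case: a2 => x2 y2; simpc; rewrite /= => -[h1 _] [h2 _].
move=> _ Hp Hm P1 P2 M1 M2 Hle ga gd gs gb s2e.
set s := Num.sqrt _ in Hle gs s2e.
set Pp := tau * x1 + y1 in Hp P1 *; set Qp := tau * x2 + y2 in Hp P2 *.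
set Pm := tau * x1 - y1 in Hm M1 *; set Qm := tau * x2 - y2 in Hm M2 *.
have ad2 : (a * d) ^+ 2 <= (2 * (Pp * Qm + Pm * Qp)) ^+ 2.
  rewrite exprMn.
  have : a ^+ 2 * d ^+ 2 <= (4 * Pp * Qp) * (4 * Pm * Qm).
    apply: ler_pM; rewrite ?sqr_ge0 //; nra.
  have := sqr_ge0 (Pp * Qm - Pm * Qp); nra.
have ad : a * d <= 2 * (Pp * Qm + Pm * Qp).
  rewrite -(ler_pXn2r (n := 2)) //; rewrite ?nnegrE; nra.
have ad3 : (a + d) ^+ 2 <= 16 * tau ^+ 2 * x1 * x2.
  have -> : 16 * tau ^+ 2 * x1 * x2 = 4 * (Pp + Pm) * (Qp + Qm) by rewrite /Pp /Pm /Qp /Qm; ring.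
  nra.
have B2 : (4 * tau * B) ^+ 2 <= (s * (a + d)) ^+ 2.
  rewrite ler_pXn2r ?nnegrE //; nra.
have : 16 * tau ^+ 2 * B ^+ 2 <= 16 * tau ^+ 2 * ((1 + tau ^+ 2) * x1 * x2).
  have -> : 16 * tau ^+ 2 * B ^+ 2 = (4 * tau * B) ^+ 2 by ring.
  apply: (le_trans B2); rewrite exprMn s2e.
  have -> : 16 * tau ^+ 2 * ((1 + tau ^+ 2) * x1 * x2) = (1 + tau ^+ 2) * (16 * tau ^+ 2 * x1 * x2) by ring.
  apply: ler_wpM2l => //; nra.
rewrite ler_pM2l //; nra.
Qed.
End Scal.
Arguments sect {R}.
Arguments cabs2 {R}.
Arguments cabs_ge0 {R}.
Arguments cabsM {R}.
Arguments cabsD {R}.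
Arguments cabsN {R}.
Arguments cabs_conj {R}.
Arguments cabs_real {R}.
Arguments Re_le_cabs {R}.
Arguments cabs_eq0 {R}.
Arguments expandRe {R}.
Arguments discr {R}.
Arguments GLc {R}.
Arguments sect_p {R}.
Arguments sect_m {R}.
Arguments sect_1 {R}.
Arguments idW {R}.
Arguments SL {R}.
Section Vec.
Variable R : realType.
Variable n : nat.
Local Notation V := 'cV[R[i]]_n.
Implicit Types (x y z u v w : V) (A : 'M[R[i]]_n).

Lemma RE_add (a b : R[i]) : RE (a + b) = RE a + RE b. Proof. by case: a; case: b. Qed.
Lemma IM_add (a b : R[i]) : IM (a + b) = IM a + IM b. Proof. by case: a; case: b. Qed.
Lemma RE_sum (F : 'I_n -> R[i]) : RE (\sum_i F i) = \sum_i RE (F i).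
Proof. exact: (big_morph _ RE_add). Qed.
Lemma IM_sum (F : 'I_n -> R[i]) : IM (\sum_i F i) = \sum_i IM (F i).
Proof. exact: (big_morph _ IM_add). Qed.

Lemma cdotDl x y z : cdot (x + y) z = cdot x z + cdot y z.
Proof. by rewrite /cdot -big_split; apply: eq_bigr => i _; rewrite mxE mulrDl. Qed.
Lemma cdotZl (a : R[i]) x z : cdot (a *: x) z = a * cdot x z.
Proof. by rewrite /cdot mulr_sumr; apply: eq_bigr => i _; rewrite mxE mulrA. Qed.
Lemma cdotDr x y z : cdot x (y + z) = cdot x y + cdot x z.
Proof. by rewrite /cdot -big_split; apply: eq_bigr => i _; rewrite mxE rmorphD mulrDr. Qed.
Lemma cdotZr (a : R[i]) x z : cdot x (a *: z) = a^*%C * cdot x z.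
Proof. by rewrite /cdot mulr_sumr; apply: eq_bigr => i _; rewrite mxE rmorphM mulrCA. Qed.
Lemma cdotC x y : cdot y x = (cdot x y)^*%C.
Proof.
rewrite /cdot rmorph_sum; apply: eq_bigr => i _.
by rewrite rmorphM /= conjcK mulrC.
Qed.
Lemma cdot0l z : cdot 0 z = 0.
Proof. by rewrite /cdot big1 // => i _; rewrite mxE mul0r. Qed.

Lemma cdot_self_RE x : RE (cdot x x) = \sum_i cabs (x i 0) ^+ 2.
Proof.
rewrite /cdot RE_sum; apply: eq_bigr => i _; rewrite cabs2.
by case: (x i 0) => a b; simpc; rewrite /=; ring.
Qed.
Lemma cdot_self_IM x : IM (cdot x x) = 0.
Proof.
rewrite /cdot IM_sum big1 // => i _.
by case: (x i 0) => a b; simpc; rewrite /=; ring.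
Qed.
Lemma cdot_self x : cdot x x = (RE (cdot x x))%:C%C.
Proof. by move: (cdot_self_IM x); case: (cdot x x) => a b /= ->. Qed.
Lemma cdot_self_ge0 x : 0 <= RE (cdot x x).
Proof. by rewrite cdot_self_RE sumr_ge0 // => i _; rewrite sqr_ge0. Qed.
Lemma cdot_self_eq0 x : RE (cdot x x) = 0 -> x = 0.
Proof.
rewrite cdot_self_RE => /eqP; rewrite psumr_eq0 => [/allP H|i _]; last by rewrite sqr_ge0.
apply/matrixP => i j; rewrite (ord1 j) mxE.
have := H i (mem_index_enum i); rewrite implyTb sqrf_eq0 => /eqP.
exact: cabs_eq0.
Qed.

Lemma mulcJ (a : R[i]) : a * a^*%C = (cabs a ^+ 2)%:C%C.
Proof. by rewrite cabs2; case: a => a b; simpc; rewrite /=; congr (_ +i* _)%C; ring. Qed.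

Lemma RE_realM (k : R) (z : R[i]) : RE (k%:C%C * z) = k * RE z.
Proof. by case: z => a b; simpc. Qed.
Lemma IM_realM (k : R) (z : R[i]) : IM (k%:C%C * z) = k * IM z.
Proof. by case: z => a b; simpc. Qed.

Lemma normalize u : 0 < RE (cdot u u) ->
  exists (r : R) (uh : V), [/\ 0 < r, cdot uh uh = 1, u = r%:C%C *: uh & RE (cdot u u) = r ^+ 2].
Proof.
move=> N0; set N := RE (cdot u u) in N0 *.
set r := Num.sqrt N.
have r0 : 0 < r by rewrite sqrtr_gt0.
have rr : r ^+ 2 = N by rewrite sqr_sqrtr // ltW.
exists r, ((r^-1)%:C%C *: u); split => //.
- rewrite cdotZl cdotZr conjc_real cdot_self -/N mulrA -!rmorphM /=.
  have -> : r^-1 * r^-1 * N = 1 by rewrite -rr; field; lra.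
  by [].
- by rewrite scalerA -rmorphM /= divrr ?unitfE ?gt_eqF // scale1r.
Qed.

Definition sform A x y := cdot (A *m x) y.

Lemma form_scale A (r : R) x : sform A (r%:C%C *: x) (r%:C%C *: x) = (r ^+ 2)%:C%C * sform A x x.
Proof.
rewrite /sform -scalemxAr cdotZl cdotZr conjc_real mulrA -rmorphM /=.
by rewrite expr2.
Qed.

Lemma form_expand A u v (t : R[i]) :
  sform A (u + t *: v) (u + t *: v) =
  sform A u u + t^*%C * sform A u v + t * sform A v u + t * t^*%C * sform A v v.
Proof.
rewrite /sform mulmxDr -scalemxAr !cdotDl !cdotDr !cdotZl !cdotZr; ring.
Qed.

Lemma sector_all alpha A : Pi_s alpha A -> forall w, sect (tan alpha) (sform A w w).
Proof.
move=> HA w.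
have [N0|Np] := eqVneq (RE (cdot w w)) 0.
  rewrite (@cdot_self_eq0 w N0) /sform mulmx0 cdot0l /sect /= normr0 mulr0; lra.
have Np' : 0 < RE (cdot w w) by rewrite lt_neqAle eq_sym Np cdot_self_ge0.
have [r [wh [r0 wh1 -> _]]] := @normalize w Np'.
have [/= h1 h2] : sector alpha (sform A wh wh).
  by apply: HA; exists wh; split.
rewrite form_scale /sect RE_realM IM_realM normrM.
have r2 : 0 < r ^+ 2 by rewrite exprn_gt0.
rewrite ger0_norm; last lra.
split; first nra.
rewrite mulrCA; apply: ler_wpM2l; lra.
Qed.

Lemma L1 alpha A u v : 0 <= tan alpha -> Pi_s alpha A ->
  cabs (sform A u v) ^+ 2 <= (1 + tan alpha ^+ 2) * RE (sform A u u) * RE (sform A v v).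
Proof.
move=> t0 HA; apply: (@SL _ (tan alpha) (sform A u u) (sform A v v) (sform A u v) (sform A v u)) => // [t|]; last exact: sector_all.
by rewrite -form_expand; apply: sector_all.
Qed.

End Vec.
Arguments RE_add {R}.
Arguments IM_add {R}.
Arguments RE_sum {R n}.
Arguments IM_sum {R n}.
Arguments cdotDl {R n}.
Arguments cdotZl {R n}.
Arguments cdotDr {R n}.
Arguments cdotZr {R n}.
Arguments cdotC {R n}.
Arguments cdot0l {R n}.
Arguments cdot_self_RE {R n}.
Arguments cdot_self_IM {R n}.
Arguments cdot_self {R n}.
Arguments cdot_self_ge0 {R n}.
Arguments cdot_self_eq0 {R n}.
Arguments mulcJ {R}.
Arguments RE_realM {R}.
Arguments IM_realM {R}.
Arguments normalize {R n}.
Arguments form_scale {R n}.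
Arguments form_expand {R n}.
Arguments sector_all {R n}.
Arguments L1 {R n}.
Arguments sform {R n}.
Local Open Scope classical_set_scope.
Section W.
Variable R : realType.
Variable n : nat.
Local Notation V := 'cV[R[i]]_n.
Implicit Types (x y z u v w : V) (A : 'M[R[i]]_n) (q : R[i]).

Lemma cabs0 : cabs (0 : R[i]) = 0.
Proof. exact: Normc.normc0. Qed.

Lemma cabs_sum (F : 'I_n -> R[i]) : cabs (\sum_i F i) <= \sum_i cabs (F i).
Proof.
apply: (big_ind2 (fun a b => cabs a <= b)); first by rewrite cabs0.

  by move=> a1 b1 a2 b2 h1 h2; apply: le_trans (cabsD _ _) _; apply: lerD.
by [].
Qed.

Lemma coord_le1 x : cdot x x = 1 -> forall j, cabs (x j 0) <= 1.
Proof.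
move=> H j.
have : RE (cdot x x) = 1 by rewrite H.
rewrite cdot_self_RE (bigD1 j) //=.
have : 0 <= \sum_(i | i != j) cabs (x i 0) ^+ 2 by apply: sumr_ge0 => i _; rewrite sqr_ge0.
have := cabs_ge0 (x j 0).
nra.
Qed.

Lemma wq_bound A x y : cdot x x = 1 -> cdot y y = 1 ->
  cabs (cdot (A *m x) y) <= \sum_i \sum_j cabs (A i j).
Proof.
move=> hx hy; rewrite /cdot; apply: le_trans (cabs_sum _) _.
apply: ler_sum => i _; rewrite cabsM cabs_conj mxE.
have h1 := coord_le1 _ hy i.
apply: le_trans (ler_wpM2r (cabs_ge0 _) (cabs_sum _)) _.
apply: le_trans (ler_wpM2l (sumr_ge0 _ (fun j _ => cabs_ge0 _)) h1) _.
rewrite mulr1; apply: ler_sum => j _; rewrite cabsM.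
have := coord_le1 _ hx j; have := cabs_ge0 (x j 0); have := cabs_ge0 (A i j); nra.
Qed.

Definition WS q A := [set r : R | exists x y : V,
         [/\ cdot x x = 1, cdot y y = 1, cdot x y = q &
             r = cabs (cdot (A *m x) y)]].

Lemma wqE q A : wq q A = sup (WS q A). Proof. by []. Qed.

Lemma WS_ub q A : has_ubound (WS q A).
Proof.
exists (\sum_i \sum_j cabs (A i j)) => r [x [y [hx hy _ ->]]].
exact: wq_bound.
Qed.

Lemma wq_ge q A x y : cdot x x = 1 -> cdot y y = 1 -> cdot x y = q ->
  cabs (cdot (A *m x) y) <= wq q A.
Proof.
move=> hx hy hq; rewrite wqE; apply: ub_le_sup; first exact: WS_ub.
by exists x, y.
Qed.

Definition feas q := exists x y : V, [/\ cdot x x = 1, cdot y y = 1 & cdot x y = q].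

Lemma wq_empty q A : ~ feas q -> wq q A = 0.
Proof.
move=> nf; rewrite wqE.
have -> : WS q A = set0.
  apply/seteqP; split => r //= [x [y [hx hy hq _]]]; apply: nf; by exists x, y.
exact: sup0.
Qed.

Lemma wq_le q A M : 0 <= M ->
  (forall x y, cdot x x = 1 -> cdot y y = 1 -> cdot x y = q -> cabs (cdot (A *m x) y) <= M) ->
  wq q A <= M.
Proof.
move=> M0 H.
case: (pselect (feas q)) => [[x [y [hx hy hq]]]|nf]; last by rewrite wq_empty.
rewrite wqE; apply: ge_sup.
  by exists (cabs (cdot (A *m x) y)), x, y.
by move=> r [x1 [y1 [h1 h2 h3 ->]]]; apply: H.
Qed.

Lemma wq_ge0 q A : 0 <= wq q A.
Proof.
case: (pselect (feas q)) => [[x [y [hx hy hq]]]|nf]; last by rewrite wq_empty.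
exact: le_trans (cabs_ge0 _) (@wq_ge q A x y hx hy hq).
Qed.

Lemma cdotNl x y : cdot (- x) y = - cdot x y.
Proof. by rewrite -scaleN1r cdotZl mulN1r. Qed.

Lemma ortho q u : feas q -> cabs q < 1 ->
  exists z, cdot z z = 1 /\ cdot z u = 0.
Proof.
move=> [x0 [y0 [hx hy hq]]] q1.
have [a0|an0] := eqVneq (cdot x0 u) 0; first by exists x0.
set a := cdot y0 u; set b := cdot x0 u.
set z0 := a *: x0 + (- b) *: y0.
have z0u : cdot z0 u = 0 by rewrite /z0 cdotDl !cdotZl -/a -/b; ring.
have N0 : 0 < RE (cdot z0 z0).
  rewrite lt_neqAle cdot_self_ge0 andbT eq_sym; apply/eqP => /cdot_self_eq0 z00.
  have e1 : cdot z0 x0 = 0 by rewrite z00 cdot0l.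
  have e2 : cdot z0 y0 = 0 by rewrite z00 cdot0l.
  move: e1 e2; rewrite /z0 !cdotDl !cdotZl hx hy (cdotC x0 y0) hq => e1 e2.
  have eb : b = b * (cabs q ^+ 2)%:C%C.
    rewrite -mulcJ.
    have ea : a = b * q^*%C.
      have : a - b * q^*%C = 0 by rewrite -e1; ring.
      by move/eqP; rewrite subr_eq0 => /eqP.
    have eb : b = a * q.
      have : b - a * q = 0 by rewrite -oppr0 -e2; ring.
      by move/eqP; rewrite subr_eq0 => /eqP.
    by rewrite [in LHS]eb ea; ring.
  have : b * (1 - (cabs q ^+ 2)%:C%C) = 0 by rewrite mulrBr mulr1 -eb subrr.
  move/eqP; rewrite mulf_eq0 (negbTE an0) /= subr_eq0 => /eqP h.
  have : cabs q ^+ 2 = 1 by case: h.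
  have := cabs_ge0 q; nra.
have [r [zh [r0 zh1 ez _]]] := @normalize _ _ z0 N0.
exists zh; split => //.
move: z0u; rewrite ez cdotZl => /eqP; rewrite mulf_eq0 => /orP[|/eqP //].
by move/eqP => [] /eqP; rewrite gt_eqF.
Qed.

Lemma ycons q u z (s0 : R) : cdot u u = 1 -> cdot z u = 0 ->
  (s0 ^+ 2)%:C%C * cdot z z = (1 - cabs q ^+ 2)%:C%C ->
  let y := q^*%C *: u + s0%:C%C *: z in
  [/\ cdot y y = 1, cdot u y = q &
   forall A, cdot (A *m u) y = q * sform A u u + s0%:C%C * cdot (A *m u) z].
Proof.
move=> hu hzu hz y; have huz : cdot u z = 0 by rewrite cdotC hzu conjc0.
split.
- rewrite /y !cdotDl !cdotDr !cdotZl !cdotZr hu hzu huz conjc_real conjcK.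
  rewrite !mulr0 !addr0 add0r mulr1 [s0%:C%C * (_ * _)]mulrA -rmorphM /= -expr2 hz.
  by rewrite mulrC mulcJ -rmorphD /= addrC subrK.
- by rewrite /y cdotDr !cdotZr hu huz conjc_real conjcK mulr0 addr0 mulr1.
- by move=> A; rewrite /y cdotDr !cdotZr conjc_real conjcK.
Qed.

Lemma L2u q A u : feas q -> cabs q <= 1 -> cdot u u = 1 ->
  cabs q * cabs (sform A u u) <= wq q A.
Proof.
move=> fq q1 hu.
have [z [s0 [hzu hz]]] : exists z (s0 : R), cdot z u = 0 /\
    (s0 ^+ 2)%:C%C * cdot z z = (1 - cabs q ^+ 2)%:C%C.
  case: (ltrP (cabs q) 1) => [ql|qg].
    have [z [hz hzu]] := ortho q u fq ql.
    exists z, (Num.sqrt (1 - cabs q ^+ 2)); split => //.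
    rewrite hz mulr1 sqr_sqrtr //; have := cabs_ge0 q; nra.
  exists 0, 0; rewrite cdot0l; split => //.
  have -> : cabs q = 1 by apply/eqP; rewrite eq_le q1 qg.
  by rewrite cdot0l mulr0 expr1n subrr.
have [hy1 hy2 hy3] := @ycons q u z s0 hu hzu hz.
have hz' : ((- s0) ^+ 2)%:C%C * cdot z z = (1 - cabs q ^+ 2)%:C%C by rewrite sqrrN.
have [hy1' hy2' hy3'] := @ycons q u z (- s0) hu hzu hz'.
have w1 := @wq_ge q A u _ hu hy1 hy2; rewrite hy3 in w1.
have w2 := @wq_ge q A u _ hu hy1' hy2'; rewrite hy3' in w2.
move: w1 w2; set a := sform A u u; set b := cdot (A *m u) z => w1 w2.
have : cabs (q * a) *+ 2 <= wq q A *+ 2.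
  rewrite -normcMn.
  have -> : (q * a) *+ 2 = (q * a + s0%:C%C * b) + (q * a + (- s0)%:C%C * b).
    by rewrite rmorphN /= mulr2n; ring.
  apply: le_trans (cabsD _ _) _; rewrite mulr2n; exact: lerD.
rewrite cabsM !mulr2n; lra.
Qed.

Lemma L2 q A w : feas q -> cabs q <= 1 ->
  cabs q * RE (sform A w w) <= wq q A * RE (cdot w w).
Proof.
move=> fq q1.
have [N0|Np] := eqVneq (RE (cdot w w)) 0.
  rewrite N0 (cdot_self_eq0 w N0) /sform mulmx0 cdot0l /= !mulr0; lra.
have Np' : 0 < RE (cdot w w) by rewrite lt_neqAle eq_sym Np cdot_self_ge0.
have [r [wh [r0 wh1 ew er]]] := normalize w Np'.
rewrite er ew form_scale RE_realM.
have h := L2u q A wh fq q1 wh1.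
have h2 := Re_le_cabs (sform A wh wh).
have h3 := cabs_ge0 q.
have r2 : 0 < r ^+ 2 by rewrite exprn_gt0.
have h4 := le_trans (ler_wpM2l h3 h2) h.
rewrite mulrCA [wq q A * _]mulrC; apply: ler_wpM2l => //; lra.
Qed.

End W.
Arguments feas {R n}.
Arguments wq_empty {R n}.
Arguments wq_ge0 {R n}.
Arguments wq_le {R n}.
Arguments L2 {R n}.
Arguments wq_ge {R n}.
Local Close Scope classical_set_scope.

Theorem corollary2p12 (R : realType) (n : nat) (q : R[i]) (A B : 'M[R[i]]_n) :
  0 < cabs q -> cabs q <= 1 ->
  (forall alpha : R, 0 <= alpha -> alpha < pi / 2 ->
     Pi_s alpha A -> Pi_s alpha B ->
     cabs q ^+ 2 * wq q (A *m B) <= (cos alpha)^-2 * (wq q A * wq q B)) /\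
  (positive_mx A -> positive_mx B ->
     cabs q ^+ 2 * wq q (A *m B) <= wq q A * wq q B).
Proof.
move=> q0 q1.
have pi2 : 0 < pi / 2 :> R by rewrite divr_gt0 // pi_gt0.
have partA : forall alpha : R, 0 <= alpha -> alpha < pi / 2 ->
     Pi_s alpha A -> Pi_s alpha B ->
     cabs q ^+ 2 * wq q (A *m B) <= (cos alpha)^-2 * (wq q A * wq q B).
  move=> al a0 apl hA hB.
  have c0 : 0 < cos al by apply: cos_gt0_pihalf; apply/andP; split; lra.
  have t0 : 0 <= tan al.
    rewrite /tan divr_ge0 ?(ltW c0) //; apply: sin_ge0_pi; apply/andP; split => //.
    have := pi_gt0 R; lra.
  have -> : (cos al)^-2 = 1 + tan al ^+ 2.
    have E : 1 + tan al ^+ 2 = (cos al ^+ 2 + sin al ^+ 2) / cos al ^+ 2.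
      by rewrite /tan; field; lra.
    by rewrite E cos2Dsin2 div1r.
  set K := 1 + tan al ^+ 2.
  have K0 : 0 <= K by rewrite /K addr_ge0 ?sqr_ge0.
  case: (pselect (feas (n:=n) q)) => [fq|nf]; last first.
    by rewrite !(wq_empty q) // !mulr0.
  set c := cabs q.
  set wA := wq q A; set wB := wq q B.
  have wA0 : 0 <= wA := wq_ge0 q A.
  have wB0 : 0 <= wB := wq_ge0 q B.
  have c2 : 0 < c ^+ 2 by rewrite exprn_gt0.
  suff H : wq q (A *m B) <= K * (wA * wB) / c ^+ 2.
    by rewrite -(ler_pdivlMl _ _ c2) mulrC.
  apply: wq_le; first by rewrite divr_ge0 ?mulr_ge0 // ltW.
  move=> x y hx hy hxy.
  rewrite ler_pdivlMr // -mulmxA.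
  set z := B *m x.
  set N := RE (cdot z z).
  have N0 : 0 <= N := cdot_self_ge0 z.
  have RE1 : forall v : 'cV[R[i]]_n, cdot v v = 1 -> RE (cdot v v) = 1 by move=> v ->.
  have hBx := L2 q B x fq q1; rewrite RE1 // mulr1 in hBx.
  have hBz := L2 q B z fq q1; rewrite -/N in hBz.
  have sBx := (sector_all al B hB x).1.
  have sBz := (sector_all al B hB z).1.
  have L1B := L1 al B x z t0 hB; rewrite -/K in L1B.
  have Nle : N <= cabs (sform B x z) by apply: Re_le_cabs.
  have gB := cabs_ge0 (sform B x z).
  have c0' : 0 <= c by apply: ltW; rewrite /c.
  have e1 : c ^+ 2 * N ^+ 2 <= K * wB ^+ 2 * N.
    have e1a : N ^+ 2 <= cabs (sform B x z) ^+ 2 by nra.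
    have e1b : c ^+ 2 * cabs (sform B x z) ^+ 2 <=
               K * (c * RE (sform B x x)) * (c * RE (sform B z z)).
      have -> : K * (c * RE (sform B x x)) * (c * RE (sform B z z)) =
                c ^+ 2 * (K * RE (sform B x x) * RE (sform B z z)) by ring.
      by apply: ler_wpM2l => //; apply: ltW.
    have e1c : K * (c * RE (sform B x x)) * (c * RE (sform B z z)) <= K * wB * (wB * N).
      rewrite -mulrA -[K * wB * _]mulrA; apply: ler_wpM2l => //.
      apply: ler_pM => //; apply: mulr_ge0 => //.
    have : c ^+ 2 * N ^+ 2 <= c ^+ 2 * cabs (sform B x z) ^+ 2 by apply: ler_wpM2l => //; apply: ltW.
    move: e1b e1c; rewrite /K; nra.
  have e2 : c ^+ 2 * N <= K * wB ^+ 2.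
    case: (ltrP 0 N) => [Np|Nn].
      by rewrite -(ler_pM2r Np); move: e1; rewrite expr2; nra.
    have -> : N = 0 by lra.
    by rewrite mulr0 mulr_ge0 // sqr_ge0.
  have hAy := L2 q A y fq q1; rewrite RE1 // mulr1 in hAy.
  have hAz := L2 q A z fq q1; rewrite -/N in hAz.
  have sAy := (sector_all al A hA y).1.
  have sAz := (sector_all al A hA z).1.
  have L1A := L1 al A z y t0 hA; rewrite -/K in L1A.
  have gA := cabs_ge0 (sform A z y).
  have f1 : (c ^+ 2 * cabs (sform A z y)) ^+ 2 <= (K * (wA * wB)) ^+ 2.
    have f1a : c ^+ 2 * cabs (sform A z y) ^+ 2 <=
               K * (c * RE (sform A z z)) * (c * RE (sform A y y)).
      have -> : K * (c * RE (sform A z z)) * (c * RE (sform A y y)) =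
                c ^+ 2 * (K * RE (sform A z z) * RE (sform A y y)) by ring.
      by apply: ler_wpM2l => //; apply: ltW.
    have f1b : K * (c * RE (sform A z z)) * (c * RE (sform A y y)) <= K * (wA * N) * wA.
      rewrite -mulrA -[K * (wA * N) * _]mulrA; apply: ler_wpM2l => //.
      apply: ler_pM => //; apply: mulr_ge0 => //.
    have f1c : c ^+ 2 * (c ^+ 2 * cabs (sform A z y) ^+ 2) <= c ^+ 2 * (K * (wA * N) * wA).
      apply: ler_wpM2l; [exact: ltW | exact: le_trans f1a f1b].
    have f1d : c ^+ 2 * (K * (wA * N) * wA) <= K * wA ^+ 2 * (K * wB ^+ 2).
      have -> : c ^+ 2 * (K * (wA * N) * wA) = K * wA ^+ 2 * (c ^+ 2 * N) by ring.
      by apply: ler_wpM2l => //; rewrite mulr_ge0 // sqr_ge0.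
    have -> : (c ^+ 2 * cabs (sform A z y)) ^+ 2 = c ^+ 2 * (c ^+ 2 * cabs (sform A z y) ^+ 2) by ring.
    have -> : (K * (wA * wB)) ^+ 2 = K * wA ^+ 2 * (K * wB ^+ 2) by ring.
    exact: le_trans f1c f1d.
  rewrite mulrC; rewrite -(ler_pXn2r (n := 2)) // ?nnegrE ?mulr_ge0 //; exact: ltW.
split; first exact: partA.
move=> hA hB; have := partA 0 (lexx 0) pi2 hA hB.
by rewrite cos0 expr1n invr1 mul1r.
Qed.
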